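(* Let $\Gamma=(V,E)$ be a connected locally finite graph with root $o$, let $\lambda\ge1$, and let $(Z_n)$ be the $\lambda$-homesick random walk on $(\Gamma,o)$. Let $\tau_o^+=\inf\{n\ge1:Z_n=o\}$. Then for every integer $r\ge1$, \[\Pr\Big(\max_{i<\tau_o^+}\mathrm{dist}(o,Z_i)\ge r\Big)\le\frac{1}{\deg o}\left(\sum_{i=0}^{r-1}|\partial_E B_i|^{-1}\lambda^i\right)^{-1}.\]
   Context: The $\lambda$-homesick random walk on $(\Gamma,o)$: $Z_0=o$; from a vertex $v$, letting $v_1,\dots,v_j$ be the neighbors of $v$ with $\mathrm{dist}(o,v_i)=\mathrm{dist}(o,v)-1$ and $v'_1,\dots,v'_k$ the other neighbors, the walk moves to each $v_i$ with probability $\frac{\lambda}{\lambda j+k}$ and to each $v'_i$ with probability $\frac{1}{\lambda j+k}$. $B_r=\{v\in V:\mathrm{dist}(o,v)\le r\}$, and $\partial_E A=\{(u,v)\in E:u\in A,v\notin A\}$ is the edge boundary. The maximum over $i<\tau_o^+$ is over all $i$ if $\tau_o^+=\infty$. *)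

(* Defs.v *)
From HB Require Import structures.
From mathcomp Require Import all_boot all_order all_algebra.
From mathcomp Require Import all_classical all_reals ereal esum.
Set Implicit Arguments. Unset Strict Implicit. Unset Printing Implicit Defensive.
Import Order.TTheory GRing.Theory Num.Theory.
Local Open Scope ring_scope.

(* A locally finite graph on a vertex type V is given by its neighbour lists
   nb : V -> seq V (hypotheses of simplicity/symmetry are in the theorem).
   o is the root. *)
Section Graph.
Variables (V : choiceType) (nb : V -> seq V) (o : V).

Definition adj (x y : V) : bool := y \in nb x.

Fixpoint ballseq (n : nat) : seq V :=
  match n with
  | 0 => [:: o]
  | n.+1 => let b := ballseq n in undup (b ++ flatten (map nb b))
  end.

(* Graph distance from o: the least n such that v is in the ball of radius n
   (0 if v is not reachable; never happens under connectedness). *)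
Definition dist (v : V) : nat :=
  match pselect (exists n, v \in ballseq n) with
  | left H => ex_minn H
  | right _ => 0
  end.

Definition edge_boundary (i : nat) : nat :=
  \sum_(u <- ballseq i) count (fun v => (i < dist v)%N) (nb u).

Variable (R : realType) (lam : R).

Definition hs_p (v u : V) : R :=
  let j := count (fun w => (dist w < dist v)%N) (nb v) in
  let k := (size (nb v) - j)%N in
  if u \in nb v then
    (if (dist u < dist v)%N then lam else 1) / (lam * j%:R + k%:R)
  else 0.

Fixpoint path_prob (x : V) (s : seq V) : R :=
  match s with
  | [::] => 1
  | y :: s' => hs_p x y * path_prob y s'
  end.

(* s = [z_1; ...; z_k] is a minimal walk prefix from Z_0 = o realising the
   event {max_{i < tau_o^+} dist(o, Z_i) >= r}: none of z_1..z_k is o,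
   dist < r before step k, dist >= r at step k. *)
Definition first_hit (r : nat) (s : seq V) : bool :=
  [&& s != [::], path adj o s, all (fun z => z != o) s,
      all (fun z => (dist z < r)%N) (belast o s) & (r <= dist (last o s))%N].

(* Pr( max_{i < tau_o^+} dist(o, Z_i) >= r ) as the (countable) sum of the
   probabilities of the disjoint cylinder events given by minimal prefixes. *)
Definition escape_prob (r : nat) : \bar R :=
  \esum_(s in [set s : seq V | first_hit r s]) (path_prob o s)%:E.

End Graph.

(* Main.v *)
Require Import Defs.
From HB Require Import structures.
From mathcomp Require Import all_boot all_order all_algebra.
From mathcomp Require Import all_classical all_reals ereal esum.
From mathcomp Require Import topology normedtype sequences.
From mathcomp Require Import ring lra.
Unset Printing Implicit Defensive.
Import Order.TTheory GRing.Theory Num.Theory numFieldNormedType.Exports.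
Local Open Scope classical_set_scope.
Local Open Scope ring_scope.

Section Walk.
Variables (V : choiceType) (nb : V -> seq V) (o : V).
Variables (R : realType) (lam : R) (r : nat).
Hypothesis lam_ge1 : 1 <= lam.
Hypothesis nb_uniq : forall x, uniq (nb x).
Hypothesis nb_irrefl : forall x, x \notin nb x.
Hypothesis nb_sym : forall x y, y \in nb x -> x \in nb y.
Hypothesis connected : forall v, exists s, path (adj nb) o s /\ last o s = v.
Hypothesis r_ge1 : (1 <= r)%N.

Local Notation B := (ballseq nb o).
Local Notation d := (dist nb o).
Lemma ballseq_uniq n : uniq (ballseq nb o n).
Proof. by case: n => [|n] //=; rewrite undup_uniq. Qed.

Lemma ballseqS n x : x \in ballseq nb o n -> x \in ballseq nb o n.+1.
Proof. by move=> h /=; rewrite mem_undup mem_cat h. Qed.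

Lemma ballseq_mono n m x : (n <= m)%N -> x \in ballseq nb o n -> x \in B m.
Proof.
move=> /subnK <-; elim: (m - n)%N => [|k IH] // h.
by rewrite addSn; apply: ballseqS; apply: IH.
Qed.

Lemma ballseq_nb n x y : x \in ballseq nb o n -> y \in nb x -> y \in ballseq nb o n.+1.
Proof.
move=> hx hy /=; rewrite mem_undup mem_cat; apply/orP; right.
by apply/flattenP; exists (nb x) => //; apply: map_f.
Qed.

Lemma reach v : exists n, v \in ballseq nb o n.
Proof.
have [s [hp <-]] := connected v.
elim/last_ind: s hp => [|s y IH]; first by exists 0%N; rewrite /= inE.
rewrite rcons_path => /andP [hp hy]; have [n hn] := IH hp.
by exists n.+1; rewrite last_rcons; apply: ballseq_nb hn hy.
Qed.

Lemma distP v : v \in ballseq nb o (d v) /\ forall n, v \in ballseq nb o n -> (d v <= n)%N.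
Proof.
rewrite /dist; case: pselect => [h|h]; last by exfalso; apply: h; apply: reach.
by case: ex_minnP.
Qed.

Lemma mem_ballseq n v : (v \in ballseq nb o n) = (d v <= n)%N.
Proof.
have [h1 h2] := distP v; apply/idP/idP; first exact: h2.
by move=> le; apply: ballseq_mono le h1.
Qed.

Lemma dist_o : d o = 0%N.
Proof. by apply/eqP; rewrite -leqn0 -mem_ballseq /= inE. Qed.

Lemma dist_nb x y : y \in nb x -> (d y <= (d x).+1)%N.
Proof. by move=> h; rewrite -mem_ballseq; apply: ballseq_nb h; rewrite mem_ballseq. Qed.



Local Notation p := (hs_p nb o lam).

Definition om v u : R := if (d u < d v)%N then lam else 1.
Definition jj v := count (fun w => (d w < d v)%N) (nb v).
Definition W v : R := lam * (jj v)%:R + (size (nb v) - jj v)%N%:R.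

Lemma sum_if (s : seq V) (P : pred V) :
  \sum_(u <- s) (if P u then lam else 1) =
  lam * (count P s)%:R + (size s - count P s)%N%:R.
Proof.
elim: s => [|x s IH]; first by rewrite big_nil /= mulr0 addr0.
rewrite big_cons IH /=; case: (P x) => /=.
  by rewrite subSS natrD; ring.
by rewrite add0n subSn ?count_size // -addn1 natrD; ring.
Qed.

Lemma W_sum v : W v = \sum_(u <- nb v) om v u.
Proof. by rewrite /W /om sum_if. Qed.

Lemma om_ge1 v u : 1 <= om v u.
Proof. by rewrite /om; case: ifP. Qed.

Lemma W_ge0 v : 0 <= W v.
Proof. by rewrite W_sum; apply: sumr_ge0 => u _; exact: le_trans ler01 (om_ge1 v u). Qed.

Lemma p_nb v u : u \in nb v -> p v u = om v u / W v.
Proof. by move=> h; rewrite /hs_p h. Qed.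

Lemma p_ge0 v u : 0 <= p v u.
Proof.
rewrite /hs_p; case: ifP => // h; apply: divr_ge0; last exact: W_ge0.
case: ifP => _ //; exact: le_trans ler01 lam_ge1.
Qed.

Lemma sum_p v : \sum_(u <- nb v) p v u <= 1.
Proof.
rewrite (eq_big_seq (fun u => om v u / W v)); last by move=> u h; rewrite p_nb.
rewrite -mulr_suml -W_sum; have [->|nz] := eqVneq (W v) 0.
  by rewrite mul0r.
by rewrite mulfV.
Qed.

Definition Ext (f : V -> R) u : R :=
  if u == o then 0 else if (r <= d u)%N then 1 else f u.

Fixpoint a n v : R :=
  if n is n'.+1 then \sum_(u <- nb v) p v u * Ext (a n') u else 0.

Lemma sum_pE v (f : V -> R) : (forall u, 0 <= f u <= 1) ->
  0 <= \sum_(u <- nb v) p v u * Ext f u <= 1.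
Proof.
move=> hf; apply/andP; split.
  apply: sumr_ge0 => u _; apply: mulr_ge0 (p_ge0 _ _) _.
  by rewrite /Ext; case: eqP => // _; case: ifP => // _; case/andP: (hf u).
apply: le_trans (sum_p v); apply: ler_sum => u _.
rewrite -{2}(mulr1 (p v u)). apply: (ler_wpM2l (p_ge0 v u)).
by rewrite /Ext; case: eqP => // _; case: ifP => // _; case/andP: (hf u).
Qed.

Lemma a_bounds n v : 0 <= a n v <= 1.
Proof.
elim: n v => [|n IH] v /=; first by rewrite lexx ler01.
exact: sum_pE.
Qed.

Lemma a_mono n v : a n v <= a n.+1 v.
Proof.
elim: n v => [|n IH] v; first by case/andP: (a_bounds 1 v).
rewrite [a n.+1 v]/= [a n.+2 v]/=; apply: ler_sum => u _.
apply: (ler_wpM2l (p_ge0 v u)).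
by rewrite /Ext; case: eqP => // _; case: ifP.
Qed.

Definition g v : R := limn (fun n => a n v).

Lemma a_nd v : {homo (fun n => a n v) : n m / (n <= m)%N >-> n <= m}.
Proof. by apply/nondecreasing_seqP => n; apply: a_mono. Qed.

Lemma a_cvg v : (fun n => a n v) @ \oo --> g v.
Proof.
apply: nondecreasing_is_cvgn; first exact: a_nd.
by exists 1 => _ [n _ <-]; case/andP: (a_bounds n v).
Qed.

Lemma a_le_g n v : a n v <= g v.
Proof. exact: (nondecreasing_cvgn_le (a_nd v) (cvgP _ (a_cvg v)) n). Qed.

Lemma g_eq v : g v = \sum_(u <- nb v) p v u * Ext g u.
Proof.
have h1 : (fun n => a n.+1 v) @ \oo --> g v.
  by have := a_cvg v; rewrite -cvg_shiftS.
have h2 : forall s, (fun n => \sum_(u <- s) p v u * Ext (a n) u) @ \oo -->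
                   \sum_(u <- s) p v u * Ext g u.
  elim => [|x s IH].
    rewrite big_nil (_ : (fun _ => _) = fun=> 0); first exact: cvg_cst.
    by apply/funext => n; rewrite big_nil.
  rewrite big_cons (_ : (fun _ => _) = (fun n => p v x * Ext (a n) x) +
              (fun n => \sum_(u <- s) p v u * Ext (a n) u)); last first.
    by apply/funext => n; rewrite big_cons.
  have hx : (fun n => p v x * Ext (a n) x) @ \oo --> p v x * Ext g x.
    apply: cvgMr; rewrite /Ext.
    case: eqP => _; first exact: cvg_cst.
    case: ifP => _; first exact: cvg_cst.
    exact: a_cvg.
  exact: cvgD hx IH.
have e1 := cvg_lim (@Rhausdorff R) h1.
have e2 := cvg_lim (@Rhausdorff R) (h2 (nb v)).
by rewrite -e1 -e2.
Qed.


Definition fh v (s : seq V) : bool :=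
  [&& s != [::], path (adj nb) v s, all (fun z => z != o) s,
      all (fun z => (d z < r)%N) (belast v s) & (r <= d (last v s))%N].

Local Notation pp := (path_prob nb o lam).

Lemma pp_ge0 v s : 0 <= pp v s.
Proof.
elim: s v => [|x s IH] v /=; first exact: ler01.
exact: mulr_ge0 (p_ge0 _ _) (IH _).
Qed.

Lemma split_head v (F : seq (seq V)) (f : seq V -> R) :
  all (fun s => head o s \in nb v) F ->
  \sum_(s <- F) f s = \sum_(u <- nb v) \sum_(s <- F | head o s == u) f s.
Proof.
elim: F => [|s F IH] /=.
  by rewrite big_nil big1_seq // => u _; rewrite big_nil.
case/andP=> hs hF; rewrite big_cons IH //.
rewrite [RHS](eq_bigr (fun u => (if head o s == u then f s else 0) +
                  \sum_(s0 <- F | head o s0 == u) f s0)); last first.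
  by move=> u _; rewrite big_cons; case: ifP; rewrite ?add0r.
rewrite big_split /=; congr (_ + _).
rewrite -big_mkcond big_const_seq.
have -> : count (fun u => head o s == u) (nb v) = 1%N.
  rewrite (eq_count (a2 := pred1 (head o s))); last by move=> u /=; rewrite eq_sym.
  by rewrite count_uniq_mem ?hs ?nb_uniq.
by rewrite /= addr0.
Qed.

Lemma paths_le N v (F : seq (seq V)) : uniq F -> all (fh v) F ->
  all (fun s => size s <= N)%N F -> \sum_(s <- F) pp v s <= a N v.
Proof.
elim: N v F => [|N IH] v F uF hF hS.
  case: F uF hF hS => [|s F] _; first by rewrite big_nil.
  by move=> /andP [h1 _] /andP [h2 _]; case: s h1 h2 => [|x s].
rewrite (split_head v F (pp v)); last first.
  apply/allP => s sF; have /andP [ne /andP [hp _]] := allP hF s sF.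
  by case: s ne hp {sF} => [|x s] //= _ /andP [].
rewrite /=; apply: ler_sum => u uv.
rewrite /Ext; case: eqP => [uo|uo].
  rewrite mulr0 big1_seq // => s /andP [hu sF]; exfalso.
  have /andP [ne /andP [_ /andP [ho _]]] := allP hF s sF.
  by case: s ne hu ho {sF} => [|x s] //= _ /eqP -> /andP []; rewrite uo eqxx.
case: ifP => hr.
  rewrite -big_filter mulr1.
  set L := [seq s <- F | head o s == u].
  have hL : forall s, s \in L -> s = [:: u].
    move=> s; rewrite mem_filter => /andP [hu sF].
    have /and5P [ne _ _ hb hl] := allP hF s sF.
    case: s ne hu hb hl {sF} => [|x s] //= _ /eqP ->.
    case: s => [|y s] //= /and3P [_ hd _]; rewrite leqNgt in hr.
    by rewrite hd in hr.
  rewrite (eq_big_seq (fun _ => p v u)); last first.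
    by move=> s /hL ->; rewrite /= mulr1.
  rewrite big_const_seq count_predT.
  have : (size L <= 1)%N.
    apply: (uniq_leq_size (s2 := [:: [:: u]])); first exact: filter_uniq.
    by move=> s /hL ->; rewrite inE.
  case: L hL => [|s1 [|s2 L]] //= _ _; first exact: p_ge0.
  by rewrite addr0.
rewrite -big_filter.
set L := [seq s <- F | head o s == u].
have hL : forall s, s \in L -> exists s', [/\ s = u :: s', fh u s' & (size s' <= N)%N].
  move=> s; rewrite mem_filter => /andP [hu sF].
  have /and5P [ne hp hno hb hl] := allP hF s sF.
  have hsz := allP hS s sF.
  case: s ne hu hp hno hb hl hsz {sF} => [|x s] //= _ /eqP -> /andP [_ hp]
     /andP [_ hno] /andP [_ hb] hl hsz.
  exists s; split => //; apply/and5P; split => //.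
  by case: s hl {hp hno hb hsz} => //= hl; rewrite hl in hr.
rewrite (eq_big_seq (fun s => p v u * pp u (behead s))); last first.
  by move=> s /hL [s' [-> _ _]].
rewrite -mulr_sumr; apply: (ler_wpM2l (p_ge0 v u)).
rewrite -(big_map behead predT); apply: IH.
- rewrite map_inj_in_uniq; first exact: filter_uniq.
  by move=> s1 s2 /hL [s1' [-> _ _]] /hL [s2' [-> _ _]] /= ->.
- by apply/allP => s' /mapP [s /hL [s1 [-> h _]] ->].
- by apply/allP => s' /mapP [s /hL [s1 [-> _ h]] ->].
Qed.

Lemma escape_le_g : (escape_prob nb o lam r <= (g o)%:E)%E.
Proof.
rewrite /escape_prob /esum; apply: ge_ereal_sup => /= _ [X [finX XF] <-].
rewrite fsbig_finite // sumEFin lee_fin.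
set L := finmap.enum_fset (fset_set X).
apply: le_trans (a_le_g (\max_(s <- L) size s) o).
apply: paths_le; first exact: finmap.fset_uniq.
- apply/allP => s sL.
  have : s \in X by rewrite -(in_fset_set finX).
  by rewrite inE => /XF.
- by apply/allP => s sL; apply: leq_bigmax_seq.
Qed.

Definition c v u : R := lam^-1 ^+ minn (d v) (d u).
Definition G : V -> R := Ext g.

Lemma lam_neq0 : lam != 0.
Proof. by rewrite gt_eqF // (lt_le_trans ltr01 lam_ge1). Qed.

Lemma cC v u : c v u = c u v.
Proof. by rewrite /c minnC. Qed.

Lemma c_nb v u : u \in nb v -> c v u = lam^-1 ^+ d v * om v u.
Proof.
move=> h; rewrite /c /om; have := dist_nb _ _ (nb_sym _ _ h); case: ltnP => hl hle.
  have -> : d v = (d u).+1 by apply/eqP; rewrite eqn_leq hle.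
  rewrite exprS mulrAC mulVf ?mul1r //.
  exact: lam_neq0.
by rewrite mulr1.
Qed.

Lemma G_o : G o = 0.
Proof. by rewrite /G /Ext eqxx. Qed.

Lemma G_out u : (r <= d u)%N -> G u = 1.
Proof.
move=> h; rewrite /G /Ext h; case: eqP => // uo.
by move: h; rewrite uo dist_o leqn0 => /eqP r0; move: r_ge1; rewrite r0.
Qed.

Definition div v := \sum_(u <- nb v) c v u * (G u - G v).

Lemma harmonic v : v != o -> (d v < r)%N -> div v = 0.
Proof.
move=> vo hv; have Gv : G v = g v by rewrite /G /Ext (negbTE vo) leqNgt hv.
rewrite /div (eq_big_seq (fun u => lam^-1 ^+ d v * (om v u * (G u - G v))));
  last by move=> u h; rewrite c_nb // mulrA.
rewrite -mulr_sumr; apply/eqP; rewrite mulf_eq0; apply/orP; right; apply/eqP.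
case E: (nb v) => [|x s]; first by rewrite big_nil.
have Wpos : 0 < W v.
  rewrite W_sum E big_cons; apply: (lt_le_trans ltr01).
  rewrite -[1]addr0; apply: lerD; first exact: om_ge1.
  by apply: sumr_ge0 => u _; exact: le_trans ler01 (om_ge1 v u).
have hg : g v = (W v)^-1 * \sum_(u <- nb v) om v u * G u.
  rewrite g_eq mulr_sumr; apply: eq_big_seq => u h.
  by rewrite p_nb // /G [RHS]mulrC mulrAC.
rewrite -E.
rewrite (eq_bigr (fun u => om v u * G u - om v u * G v)); last by move=> u _; rewrite mulrBr.
rewrite sumrB -mulr_suml -W_sum Gv hg mulrA mulfV ?mul1r ?subrr //.
by rewrite gt_eqF.
Qed.

Lemma swap (L : seq V) (K : V -> V -> R) : uniq L ->
  \sum_(v <- L) \sum_(u <- nb v | u \in L) K v u =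
  \sum_(v <- L) \sum_(u <- nb v | u \in L) K u v.
Proof.
move=> uL.
have conv : forall (H : V -> V -> R) v,
    \sum_(u <- nb v | u \in L) H v u = \sum_(u <- L) (if u \in nb v then H v u else 0).
  move=> H v; rewrite -big_mkcond -[LHS]big_filter -[RHS]big_filter; apply: perm_big.
  apply: uniq_perm; rewrite ?filter_uniq //.
  by move=> u; rewrite !mem_filter andbC.
rewrite (eq_bigr _ (fun v _ => conv K v)).
rewrite [RHS](eq_bigr _ (fun v _ => conv (fun a b => K b a) v)).
rewrite exchange_big; apply: eq_bigr => v _; apply: eq_bigr => u _.
have -> : (v \in nb u) = (u \in nb v) by apply/idP/idP => /nb_sym.
by [].
Qed.

Lemma anti0 (L : seq V) (K : V -> V -> R) : uniq L ->
  (forall v u, K u v = - K v u) ->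
  \sum_(v <- L) \sum_(u <- nb v | u \in L) K v u = 0.
Proof.
move=> uL hK; set X := LHS.
have hX : X = - X.
  rewrite {1}/X swap // /X -sumrN; apply: eq_bigr => v _.
  by rewrite -sumrN; apply: eq_bigr => u _; rewrite hK.
have : X + X = 0 by rewrite {1}hX addNr.
by rewrite -mulr2n -mulr_natr => /eqP; rewrite mulf_eq0 pnatr_eq0 orbF => /eqP.
Qed.

Lemma cut_flow i : (i < r)%N ->
  \sum_(v <- B i) \sum_(u <- nb v | (i < d u)%N) c v u * (G u - G v) = div o.
Proof.
move=> ir.
have h1 : \sum_(v <- B i) div v = div o.
  rewrite (bigD1_seq o) ?ballseq_uniq //=; last by rewrite mem_ballseq dist_o.
  rewrite big1_seq ?addr0 // => v /andP [vo vB]; apply: harmonic => //.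
  by rewrite mem_ballseq in vB; exact: leq_ltn_trans vB ir.
rewrite -h1 /div.
have h0 : \sum_(v <- B i) \sum_(u <- nb v | u \in B i) c v u * (G u - G v) = 0.
  apply: anti0; first exact: ballseq_uniq.
  by move=> v u; rewrite cC -mulrN opprB.
apply/esym; rewrite (eq_bigr (fun v => \sum_(u <- nb v | u \in B i) c v u * (G u - G v)
   + \sum_(u <- nb v | (i < d u)%N) c v u * (G u - G v))); last first.
  move=> v _; rewrite (bigID (fun u => u \in B i)) /=; congr (_ + _).
  by apply: eq_bigl => u; rewrite mem_ballseq ltnNge.
by rewrite big_split /= h0 add0r.
Qed.

Lemma div_o : div o = \sum_(u <- nb o) G u.
Proof.
rewrite /div; apply: eq_bigr => u _.
by rewrite /c dist_o min0n expr0 mul1r G_o subr0.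
Qed.

Lemma g_o : g o = ((size (nb o))%:R)^-1 * div o.
Proof.
rewrite g_eq div_o mulr_sumr; apply: eq_big_seq => u h.
have hW : W o = (size (nb o))%:R.
  rewrite /W /jj dist_o (eq_count (a2 := pred0)) // count_pred0 mulr0 add0r subn0 //.
by rewrite p_nb // hW /om dist_o /= mul1r.
Qed.

Local Notation Bq := (B r.-1).

Lemma mem_Bq v : (v \in Bq) = (d v < r)%N.
Proof. by rewrite mem_ballseq -{2}(prednK r_ge1) ltnS. Qed.

Definition F2 v u := c v u * (G u - G v) ^+ 2.
Definition Kf v u := c v u * G v * (G v - G u).

Lemma KK v u : Kf v u + Kf u v = F2 v u.
Proof.
rewrite /Kf /F2 (cC u v); move: (c v u) (G u) (G v) => k x y; ring.
Qed.

Lemma F2C v u : F2 v u = F2 u v.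
Proof. by rewrite /F2 cC -sqrrN opprB. Qed.

Lemma Fbd v u : G u = 1 -> F2 v u - Kf v u = c v u * (G u - G v).
Proof.
rewrite /Kf /F2 => ->; move: (c v u) (G v) => k y; ring.
Qed.

Lemma F2_ge0 v u : 0 <= F2 v u.
Proof.
rewrite /F2; apply: mulr_ge0; last exact: sqr_ge0.
apply: exprn_ge0; rewrite invr_ge0; exact: le_trans ler01 lam_ge1.
Qed.

Definition Tsum := \sum_(v <- Bq) \sum_(u <- nb v | (d v < d u)%N) F2 v u.

Lemma energy : Tsum <= div o.
Proof.
set Int := \sum_(v <- Bq) \sum_(u <- nb v | u \in Bq) Kf v u.
set Bd := \sum_(v <- Bq) \sum_(u <- nb v | u \notin Bq) Kf v u.
have e1 : Int + Bd = 0.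
  rewrite /Int /Bd -big_split /=; apply: big1_seq => v /andP [_ vB].
  have -> : \sum_(u <- nb v | u \in Bq) Kf v u + \sum_(u <- nb v | u \notin Bq) Kf v u
     = \sum_(u <- nb v) Kf v u by rewrite [RHS](bigID (fun u => u \in Bq)).
  have -> : \sum_(u <- nb v) Kf v u = - G v * div v.
    rewrite /div mulr_sumr; apply: eq_bigr => u _.
    by rewrite /Kf; move: (c v u) (G u) (G v) => k x y; ring.
  case: (eqVneq v o) => [->|vo]; first by rewrite G_o oppr0 mul0r.
  by rewrite harmonic ?mulr0 // -mem_Bq.
set U := \sum_(v <- Bq) \sum_(u <- nb v | u \in Bq) (if (d v < d u)%N then F2 v u else 0).
have e3 : U + U <= Int + Int.
  have -> : Int + Int = \sum_(v <- Bq) \sum_(u <- nb v | u \in Bq) F2 v u.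
    rewrite {1}/Int swap ?ballseq_uniq // /Int -big_split; apply: eq_bigr => v _.
    rewrite -big_split; apply: eq_bigr => u _; rewrite -(KK v u); exact: addrC.
  have hU2 : U = \sum_(v <- Bq) \sum_(u <- nb v | u \in Bq) (if (d u < d v)%N then F2 v u else 0).
    rewrite /U swap ?ballseq_uniq //; apply: eq_bigr => v _; apply: eq_bigr => u _.
    by rewrite F2C.
  have pt : forall v u, (if (d v < d u)%N then F2 v u else 0) +
      (if (d u < d v)%N then F2 v u else 0) <= F2 v u.
    move=> v u; case: ltngtP => h; rewrite ?addr0 ?add0r ?lexx //.
    exact: F2_ge0.
  rewrite {2}hU2 /U -big_split; apply: ler_sum => v _; rewrite -big_split; apply: ler_sum => u _.
  exact: pt.
have e4 : Tsum = U + \sum_(v <- Bq) \sum_(u <- nb v | u \notin Bq) F2 v u.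
  rewrite /Tsum /U -big_split; apply: eq_big_seq => v vB /=.
  rewrite (bigID (fun u => u \in Bq)) /=; congr (_ + _).
    rewrite (eq_bigl (fun u => (u \in Bq) && (d v < d u)%N)); last by move=> u; rewrite andbC.
    by rewrite big_mkcondr.
  apply: eq_bigl => u; case: (boolP (u \in Bq)) => hu; rewrite ?andbF ?andbT //.
  by move: vB hu; rewrite !mem_Bq -leqNgt => h1 h2; exact: leq_trans h1 h2.
have e5 : \sum_(v <- Bq) \sum_(u <- nb v | u \notin Bq) F2 v u - Bd = div o.
  rewrite -(cut_flow (r.-1)); last by rewrite -{2}(prednK r_ge1).
  rewrite /Bd -sumrB; apply: eq_bigr => v _; rewrite -sumrB.
  have hc : forall u, (u \notin Bq) = (r.-1 < d u)%N.
    by move=> u; rewrite mem_Bq -leqNgt -{1}(prednK r_ge1).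
  apply: eq_big => [u|u hu]; first exact: hc.
  by apply: Fbd; apply: G_out; rewrite mem_Bq -leqNgt in hu.
rewrite e4 -e5.
have hUI : U <= Int.
  by rewrite -!mulr2n in e3; rewrite -(ler_pMn2r (n := 2)).
have hI : Int = - Bd by apply/eqP; rewrite -addr_eq0 e1.
by rewrite addrC lerD2l -hI.
Qed.

Lemma level_conv i (h : V -> V -> R) : (i < r)%N ->
  \sum_(v <- B i) \sum_(u <- nb v | (i < d u)%N) h v u =
  \sum_(v <- Bq) (if d v == i then \sum_(u <- nb v | (d v < d u)%N) h v u else 0).
Proof.
move=> ir.
rewrite (eq_big_seq (fun v => if d v == i then
    \sum_(u <- nb v | (d v < d u)%N) h v u else 0)); last first.
  move=> v; rewrite mem_ballseq => vi; case: eqP => [<-|ne]; first by [].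
  apply: big1_seq => u /andP [hu un].
  have h1 := dist_nb v u un.
  have h2 : (d v < i)%N by rewrite ltn_neqAle vi andbT; apply/eqP.
  by rewrite ltnNge (leq_trans h1 h2) in hu.
rewrite -[LHS]big_mkcond -[RHS]big_mkcond -[LHS]big_filter -[RHS]big_filter.
apply: perm_big; apply: uniq_perm; rewrite ?filter_uniq ?ballseq_uniq //.
move=> v; rewrite !mem_filter mem_Bq mem_ballseq.
by case: eqP => // ->; rewrite leqnn ir.
Qed.

Section CS.
Variables (L : seq V) (P : V -> V -> bool).
Definition DS (f : V -> V -> R) := \sum_(v <- L) \sum_(u <- nb v | P v u) f v u.

Lemma DS_lin (al be ga : R) f g0 :
  DS (fun v u => al * f v u + be * g0 v u + ga * 1) =
  al * DS f + be * DS g0 + ga * DS (fun _ _ => 1).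
Proof.
rewrite /DS !mulr_sumr -!big_split; apply: eq_bigr => v _.
rewrite !mulr_sumr -!big_split; apply: eq_bigr => u _.
reflexivity.
Qed.

Lemma DS_ge0 f : (forall v u, 0 <= f v u) -> 0 <= DS f.
Proof. by move=> h; apply: sumr_ge0 => v _; apply: sumr_ge0 => u _. Qed.

Lemma cs2 (x : V -> V -> R) : 0 < DS (fun _ _ => 1) ->
  (DS x) ^+ 2 <= DS (fun _ _ => 1) * DS (fun v u => x v u ^+ 2).
Proof.
set n := DS _ => n0; set s := DS x; set q := DS _.
have h : 0 <= DS (fun v u => (n * x v u - s) ^+ 2).
  by apply: DS_ge0 => v u; apply: sqr_ge0.
have e : DS (fun v u => (n * x v u - s) ^+ 2) =
         DS (fun v u => n ^+ 2 * (x v u ^+ 2) + (- (2%:R * n * s)) * x v u + s ^+ 2 * 1).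
  have id : forall y n' s' : R, (n' * y - s') ^+ 2 =
     n' ^+ 2 * (y ^+ 2) + (- (2%:R * n' * s')) * y + s' ^+ 2 * 1 by move=> y n' s'; ring.
  by apply: eq_bigr => v _; apply: eq_bigr => u _; rewrite id.
rewrite e DS_lin -/q -/s -/n in h.
have h2 : 0 <= n * (n * q - s ^+ 2).
  have id : forall n' q' s' : R, n' * (n' * q' - s' ^+ 2) =
     n' ^+ 2 * q' + - (2%:R * n' * s') * s' + s' ^+ 2 * n' by move=> n' q' s'; ring.
  by rewrite id.
by rewrite pmulr_rge0 // subr_ge0 in h2.
Qed.
End CS.

Definition Ei i := \sum_(v <- Bq)
  (if d v == i then \sum_(u <- nb v | (d v < d u)%N) F2 v u else 0).

Lemma level_bound i : (i < r)%N -> (0 < edge_boundary nb o i)%N ->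
  ((edge_boundary nb o i)%:R)^-1 * lam ^+ i * (div o) ^+ 2 <= Ei i.
Proof.
move=> ir Npos.
have hn : (edge_boundary nb o i)%:R = DS (B i) (fun _ u => (i < d u)%N) (fun _ _ => 1).
  rewrite /edge_boundary natr_sum /DS; apply: eq_bigr => v _.
  by rewrite -sum1_count natr_sum; apply: eq_bigr => u _.
have hs : DS (B i) (fun _ u => (i < d u)%N) (fun v u => c v u * (G u - G v)) = div o.
  exact: cut_flow.
have hq : DS (B i) (fun _ u => (i < d u)%N) (fun v u => (c v u * (G u - G v)) ^+ 2) =
    lam^-1 ^+ i * Ei i.
  have e : Ei i = DS (B i) (fun _ u => (i < d u)%N) F2 by rewrite /DS level_conv.
  rewrite e /DS mulr_sumr; apply: eq_big_seq => v vB.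
  rewrite mulr_sumr [LHS]big_seq_cond [RHS]big_seq_cond; apply: eq_bigr => u /andP [un hu].
  have hc : c v u = lam^-1 ^+ i.
    rewrite mem_ballseq in vB; have h1 := dist_nb v u un.
    have dvi : d v = i.
      by apply/eqP; rewrite eqn_leq vB /=; rewrite -ltnS; exact: leq_trans hu h1.
    by rewrite /c dvi (minn_idPl (ltnW hu)).
  rewrite /F2 hc; move: (lam^-1 ^+ i) (G u - G v) => k y.
  ring.
have N0 : 0 < (edge_boundary nb o i)%:R :> R by rewrite ltr0n.
have := cs2 (B i) (fun _ u => (i < d u)%N) (fun v u => c v u * (G u - G v)).
rewrite -hn hs hq => /(_ N0) hcs.
have lpos : 0 < lam ^+ i by apply: exprn_gt0; exact: lt_le_trans ltr01 lam_ge1.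
have : ((edge_boundary nb o i)%:R)^-1 * lam ^+ i * div o ^+ 2 <=
       ((edge_boundary nb o i)%:R)^-1 * lam ^+ i *
       ((edge_boundary nb o i)%:R * (lam^-1 ^+ i * Ei i)).
  apply: ler_wpM2l hcs; apply: mulr_ge0; last exact: ltW.
  by rewrite invr_ge0 ltW.
suff -> : ((edge_boundary nb o i)%:R)^-1 * lam ^+ i *
       ((edge_boundary nb o i)%:R * (lam^-1 ^+ i * Ei i)) = Ei i by [].
rewrite exprVn; move: ((edge_boundary nb o i)%:R) (lam ^+ i) (Ei i) N0 lpos => N l E hN hl.
by field; apply/andP; split; rewrite gt_eqF.
Qed.

Lemma sum_Ei : \sum_(i < r) Ei i = Tsum.
Proof.
rewrite /Ei exchange_big /Tsum; apply: eq_big_seq => v vB /=.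
rewrite mem_Bq in vB.
rewrite -big_mkcond (big_pred1 (Ordinal vB)) // => i /=.
Qed.

Lemma main_bound : (forall i, (i < r)%N -> (0 < edge_boundary nb o i)%N) ->
  g o <= ((size (nb o))%:R)^-1 *
         (\sum_(i < r) ((edge_boundary nb o i)%:R)^-1 * lam ^+ i)^-1.
Proof.
move=> hN.
set S := \sum_(i < r) _.
have Spos : 0 < S.
  rewrite /S (bigD1 (Ordinal r_ge1)) //=; apply: (@lt_le_trans _ _ (((edge_boundary nb o 0)%:R)^-1 * lam ^+ 0)).
    by rewrite expr0 mulr1 invr_gt0 ltr0n hN.
  rewrite lerDl; apply: sumr_ge0 => i _; apply: mulr_ge0.
    by rewrite invr_ge0.
  by apply: exprn_ge0; exact: le_trans ler01 lam_ge1.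
have key : S * (div o) ^+ 2 <= div o.
  apply: le_trans (energy); rewrite -sum_Ei /S mulr_suml; apply: ler_sum => i _.
  exact: level_bound (hN _ (ltn_ord i)).
have hI : div o <= S^-1.
  case: (lerP (div o) 0) => h0.
    by apply: le_trans h0 _; rewrite invr_ge0 ltW.
  have h1 : S * div o <= 1.
    by rewrite -(ler_pM2r h0) mul1r -mulrA -expr2.
  rewrite -(ler_pM2l Spos) mulfV ?gt_eqF //.
rewrite g_o; apply: ler_wpM2l hI.
by rewrite invr_ge0.
Qed.

Lemma crossing i x s : path (adj nb) x s -> (d x <= i)%N -> (i < d (last x s))%N ->
  exists v u, [/\ (d v <= i)%N, u \in nb v & (i < d u)%N].
Proof.
elim: s x => [|y s IH] x /=; first by move=> _ h1 h2; rewrite ltnNge h1 in h2.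
move=> /andP [hxy hp] hx hl; case: (ltnP i (d y)) => hy; first by exists x, y.
exact: IH hp hy hl.
Qed.

Lemma no_fh i : (i < r)%N -> edge_boundary nb o i = 0%N -> forall s, ~~ fh o s.
Proof.
move=> ir h0 s; apply/negP => /and5P [ne hp _ _ hl].
have [v [u [hv un hu]]] : exists v u, [/\ (d v <= i)%N, u \in nb v & (i < d u)%N].
  by apply: (crossing _ _ _ hp); rewrite ?dist_o //; exact: leq_trans ir hl.
move: h0; rewrite /edge_boundary (big_rem v) ?mem_ballseq //= => /eqP.
rewrite addn_eq0 => /andP [/eqP hc _].
move: hc => /eqP; rewrite -leqn0 leqNgt -has_count => /negP; apply.
by apply/hasP; exists u.
Qed.

Lemma final :
  (escape_prob nb o lam r <=
   (if [exists i : 'I_r, edge_boundary nb o i == 0%N] then 0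
    else ((size (nb o))%:R)^-1 *
         (\sum_(i < r) ((edge_boundary nb o i)%:R)^-1 * lam ^+ i)^-1)%:E)%E.
Proof.
case: ifP => [/existsP [i /eqP hi] | hne].
  rewrite /escape_prob (_ : [set s | first_hit nb o r s] = set0) ?esum_set0 //.
  apply/seteqP; split => s //= hs; exfalso.
  by have := no_fh i (ltn_ord i) hi s; move/negP; apply; exact: hs.
apply: le_trans escape_le_g _; rewrite lee_fin; apply: main_bound => i ir.
have := negbT hne; move/existsPn => /(_ (Ordinal ir)).
by rewrite lt0n.
Qed.

End Walk.

Theorem proposition4p1 (V : choiceType) (nb : V -> seq V) (o : V)
  (R : realType) (lam : R) (r : nat)
  (nb_uniq : forall x, uniq (nb x))
  (nb_irrefl : forall x, x \notin nb x)
  (nb_sym : forall x y, y \in nb x -> x \in nb y)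
  (connected : forall v, exists s, path (adj nb) o s /\ last o s = v)
  (lam_ge1 : 1 <= lam) (r_ge1 : (1 <= r)%N) :
  (escape_prob nb o lam r <=
   (if [exists i : 'I_r, edge_boundary nb o i == 0%N] then 0
    else ((size (nb o))%:R)^-1 *
         (\sum_(i < r) ((edge_boundary nb o i)%:R)^-1 * lam ^+ i)^-1)%:E)%E.
Proof.
exact: (@final V nb o R lam r lam_ge1 nb_uniq nb_sym connected r_ge1).
Qed.
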